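(* Let $\Gamma=(\mathcal{G},\mathcal{I},\boldsymbol{c})$ be a nonatomic routing game with BPR-type cost functions, i.e., there is $\beta\in\mathbb{R}_+$ such that $c_e(x)=t_e+a_ex^{\beta}$ with $t_e,a_e\in\mathbb{R}_+$ for every edge $e$. Then there exists a demand-independent optimal toll (DIOT) for $\Gamma$.
   Context: A nonatomic routing game $\Gamma=(\mathcal{G},\mathcal{I},\boldsymbol{c})$ consists of a finite directed multigraph $\mathcal{G}=(\mathcal{V},\mathcal{E})$, a finite set $\mathcal{I}$ of origin-destination pairs $i$ with origin $o^i$ and destination $d^i$, and nondecreasing continuous cost functions $c_e:\mathbb{R}_+\to\mathbb{R}_+$. $\mathcal{P}^i$ is the set of simple $o^i$–$d^i$ paths. For a demand vector $\boldsymbol{\mu}\in\mathbb{R}_+^{\mathcal{I}}$, feasible flows are $\boldsymbol{f}\in\mathbb{R}_+^{\mathcal{P}}$ with $\sum_{p\in\mathcal{P}^i}f_p=\mu^i$; loads $x_e=\sum_{p\ni e}f_p$; path costs $c_p=\sum_{e\in p}c_e(x_e)$. A Wardrop equilibrium is a feasible flow where every used path of each pair $i$ has cost at most that of any other path in $\mathcal{P}^i$. The total cost is $L(\boldsymbol{f})=\sum_p f_pc_p(\boldsymbol{f})$; a system optimum minimizes $L$ over feasible flows. For a toll vector $\boldsymbol{\tau}\in\mathbb{R}^{\mathcal{E}}$ (entries may be negative), $\Gamma^{\boldsymbol{\tau}}$ has edge costs $c_e(x)+\tau_e$. $\boldsymbol{\tau}$ is a DIOT for $\Gamma$ if for every demand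 vector $\boldsymbol{\mu}\in\mathbb{R}_+^{\mathcal{I}}$ every Wardrop equilibrium of $\Gamma^{\boldsymbol{\tau}}$ with demand $\boldsymbol{\mu}$ is a system optimum of $\Gamma$ for demand $\boldsymbol{\mu}$. *)

(* Defs.v *)
From HB Require Import structures.
From mathcomp Require Import all_boot all_order all_algebra.
From mathcomp Require Import boolp reals exp.
Set Implicit Arguments. Unset Strict Implicit. Unset Printing Implicit Defensive.
Import Order.TTheory GRing.Theory Num.Theory.
Local Open Scope ring_scope.

Section Routing.
Variables (R : realType) (V E I : finType).
Variables (src dst : E -> V).
Variables (orig dest : I -> V).

Fixpoint is_walk (o d : V) (s : seq E) : bool :=
  match s with
  | [::] => o == d
  | e :: s' => (src e == o) && is_walk (dst e) d s'
  end.

Definition simple_path (o d : V) (s : seq E) : bool :=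
  is_walk o d s && uniq (o :: map dst s).

(* A simple path in a multigraph is determined by its edge set; we identify
   each simple o-d path with its (finite) set of edges. *)
Definition is_path_of (i : I) (S : {set E}) : Prop :=
  exists s : seq E, simple_path (orig i) (dest i) s /\ S = [set e in s].

Definition paths (i : I) : {set {set E}} := [set S | `[< is_path_of i S >]].

Definition flow := I -> {set E} -> R.

Definition feasible (mu : I -> R) (f : flow) : Prop :=
  (forall i S, 0 <= f i S) /\
  (forall i S, S \notin paths i -> f i S = 0) /\
  (forall i, \sum_(S in paths i) f i S = mu i).

Definition load (f : flow) (e : E) : R :=
  \sum_(i : I) \sum_(S in paths i | e \in S) f i S.

Definition path_cost (c : E -> R -> R) (f : flow) (S : {set E}) : R :=
  \sum_(e in S) c e (load f e).

Definition wardrop (c : E -> R -> R) (mu : I -> R) (f : flow) : Prop :=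
  feasible mu f /\
  forall i S S', S \in paths i -> S' \in paths i -> 0 < f i S ->
    path_cost c f S <= path_cost c f S'.

Definition total_cost (c : E -> R -> R) (f : flow) : R :=
  \sum_(i : I) \sum_(S in paths i) f i S * path_cost c f S.

Definition system_optimum (c : E -> R -> R) (mu : I -> R) (f : flow) : Prop :=
  feasible mu f /\ forall g, feasible mu g -> total_cost c f <= total_cost c g.

Definition tolled (c : E -> R -> R) (tau : E -> R) : E -> R -> R :=
  fun e x => c e x + tau e.

Definition is_DIOT (c : E -> R -> R) (tau : E -> R) : Prop :=
  forall mu : I -> R, (forall i, 0 <= mu i) ->
  forall f : flow, wardrop (tolled c tau) mu f -> system_optimum c mu f.

End Routing.

(* Main.v *)
Require Import Defs.
From HB Require Import structures.
From mathcomp Require Import all_boot all_order all_algebra.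
From mathcomp Require Import boolp reals exp.
From mathcomp Require Import ring lra.
Import Order.TTheory GRing.Theory Num.Theory.
Local Open Scope ring_scope.

Lemma keyK (R : realType) (beta x y : R) : 0 <= beta -> 0 <= x -> 0 <= y ->
  x * x `^ beta + (1 + beta) * x `^ beta * (y - x) <= y * y `^ beta.
Proof.
move=> b0 x0 y0.
have [->|bp] := eqVneq beta 0.
  by rewrite !powRr0; lra.
have bgt : 0 < beta by rewrite lt_def bp b0.
have pgt : 0 < 1 + beta by lra.
have qgt : 0 < (1 + beta) / beta by rewrite divr_gt0.
have pq : (1 + beta)^-1 + ((1 + beta) / beta)^-1 = 1.
  by rewrite invf_div; field; rewrite gt_eqF.
have := conjugate_powR y0 (powR_ge0 x beta) pgt qgt pq.
rewrite -powRrM mulrCA divff ?mulr1 ?gt_eqF //.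
have hD : forall z, 0 <= z -> z `^ (1 + beta) = z * z `^ beta.
  by move=> z z0; rewrite powRD ?powRr1 // gt_eqF.
rewrite !hD // => H.
have H2 := ler_wpM2l (ltW pgt) H.
move: H2.
have -> : (1 + beta) * (y * y `^ beta / (1 + beta) + x * x `^ beta / ((1 + beta) / beta))
   = y * y `^ beta + beta * (x * x `^ beta).
  by field; rewrite !gt_eqF.
set X := x `^ beta; set Y := y `^ beta => H2.
nra.
Qed.

Lemma swap_sum (R : realType) (V E I : finType) (src dst : E -> V)
  (orig dest : I -> V) (h : flow R E I) (C : E -> R) :
  \sum_(i : I) \sum_(S in paths src dst orig dest i) h i S * (\sum_(e in S) C e)
  = \sum_e C e * load src dst orig dest h e.
Proof.
rewrite /load.
under [RHS]eq_bigr => e _ do rewrite mulr_sumr.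
rewrite [RHS]exchange_big /=; apply: eq_bigr => i _.
under [RHS]eq_bigr => e _ do rewrite mulr_sumr big_mkcondr.
rewrite [RHS]exchange_big /=; apply: eq_bigr => S _.
rewrite mulr_sumr big_mkcond /=; apply: eq_bigr => e _.
by case: (e \in S); rewrite ?mulr0 // mulrC.
Qed.

Lemma pair_ineq (R : realType) (T : finType) (A : {set T}) (f g m : T -> R) (mu : R) :
  (forall S, 0 <= f S) -> (forall S, 0 <= g S) -> (forall S, 0 <= m S) ->
  \sum_(S in A) f S = mu -> \sum_(S in A) g S = mu ->
  (forall S S', S \in A -> S' \in A -> 0 < f S -> m S <= m S') ->
  \sum_(S in A) f S * m S <= \sum_(S in A) g S * m S.
Proof.
move=> f0 g0 m0 fs gs hw.
have D : 0 <= \sum_(S in A) \sum_(S' in A) f S * g S' * (m S' - m S).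
  apply: sumr_ge0 => S SA; apply: sumr_ge0 => S' S'A.
  have [fz|fp] := eqVneq (f S) 0; first by rewrite fz !mul0r.
  have fpos : 0 < f S by rewrite lt_def fp f0.
  by rewrite mulr_ge0 ?mulr_ge0 // subr_ge0 hw.
have E : \sum_(S in A) \sum_(S' in A) f S * g S' * (m S' - m S)
   = mu * (\sum_(S in A) g S * m S - \sum_(S in A) f S * m S).
  transitivity (\sum_(S in A) \sum_(S' in A) (f S * (g S' * m S') - g S' * (f S * m S))).
    by apply: eq_bigr => S _; apply: eq_bigr => S' _; ring.
  under eq_bigr => S _ do rewrite sumrB -mulr_sumr -mulr_suml gs.
  rewrite sumrB -mulr_sumr mulrBr; congr (_ - _).
  by rewrite -fs mulr_suml; apply: eq_bigr => S _; rewrite mulrC.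
rewrite E in D.
have mu0 : 0 <= mu by rewrite -fs sumr_ge0.
have [mz|mp] := eqVneq mu 0.
  have fz := psumr_eq0P (fun S _ => f0 S) (etrans fs mz).
  rewrite (@big1 _ _ _ _ _ _ (fun S => f S * m S)); last by move=> S SA; rewrite fz // mul0r.
  by apply: sumr_ge0 => S _; rewrite mulr_ge0.
have mupos : 0 < mu by rewrite lt_def mp mu0.
by rewrite -subr_ge0 -(pmulr_rge0 _ mupos).
Qed.

Theorem corollary3 (R : realType) (V E I : finType) (src dst : E -> V)
  (orig dest : I -> V) (beta : R) (t a : E -> R) :
  0 <= beta -> (forall e, 0 <= t e) -> (forall e, 0 <= a e) ->
  exists tau : E -> R,
    is_DIOT src dst orig dest (fun e x => t e + a e * x `^ beta) tau.
Proof.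
move=> b0 t0 a0.
exists (fun e => t e / (1 + beta) - t e).
move=> mu mu0 f [[f0 [fout fsum]] fw]; split; first by [].
move=> g [g0 [gout gsum]].
set c := (fun e x => t e + a e * x `^ beta).
have pgt : 0 < 1 + beta by lra.
set lf := load src dst orig dest f.
set lg := load src dst orig dest g.
have lf0 : forall e, 0 <= lf e.
  by move=> e; apply: sumr_ge0 => i _; apply: sumr_ge0 => S _.
have lg0 : forall e, 0 <= lg e.
  by move=> e; apply: sumr_ge0 => i _; apply: sumr_ge0 => S _.
pose m e := t e + (1 + beta) * a e * lf e `^ beta.
have m0 : forall e, 0 <= m e.
  move=> e; rewrite /m addr_ge0 // mulr_ge0 ?mulr_ge0 ?powR_ge0 //; lra.
have TC : forall h, total_cost src dst orig dest c h
   = \sum_e c e (load src dst orig dest h e) * load src dst orig dest h e.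
  by move=> h; rewrite /total_cost -swap_sum.
rewrite !TC -/lf -/lg.
have step : \sum_e (c e (lf e) * lf e + m e * (lg e - lf e)) <= \sum_e c e (lg e) * lg e.
  apply: ler_sum => e _.
  have K := @keyK R beta (lf e) (lg e) b0 (lf0 e) (lg0 e).
  have K2 := ler_wpM2l (a0 e) K.
  rewrite /c /m; move: K2; set X := lf e `^ beta; set Y := lg e `^ beta.
  move=> K2; nra.
apply: le_trans step; rewrite big_split /= lerDl.
have -> : \sum_e m e * (lg e - lf e) = \sum_e m e * lg e - \sum_e m e * lf e.
  by rewrite -sumrB; apply: eq_bigr => e _; rewrite mulrBr.
rewrite subr_ge0 -!swap_sum.
apply: ler_sum => i _.
apply: (@pair_ineq R _ _ _ _ _ (mu i)) => //.
- by move=> S; apply: sumr_ge0 => e _.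
- move=> S S' SA S'A fp.
  have := fw i S S' SA S'A fp.
  rewrite /path_cost /tolled -/lf.
  have H : forall S0 : {set E}, \sum_(e in S0) (c e (lf e) + (t e / (1 + beta) - t e))
      = (1 + beta)^-1 * \sum_(e in S0) m e.
    move=> S0; rewrite mulr_sumr; apply: eq_bigr => e _.
    by rewrite /c /m; field; rewrite gt_eqF.
  rewrite !H ler_pM2l ?invr_gt0 //.
Qed.
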